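(* Let $c\ge 1$, let $\ell$ be a $c$-approximate pseudo-metric on $\mathcal{Y}$, and let $\mathcal{H}\subseteq\mathcal{Y}^{\mathcal{X}}$ satisfy $\operatorname{diam}(\mathcal{H})<\infty$. Then every scaled Littlestone tree $\mathcal{T}$ realizable by $\mathcal{H}$ has a branch $b$ such that $\sum_{t}\gamma_{b_{\le t}}\le 4c\,\Phi(\mathcal{H})$ (sum over all internal nodes on the branch; over $t=0,\dots,D-1$ if the depth $D$ is finite). Consequently $\mathbb{D}_{\mathrm{onl}}(\mathcal{H})\le 4c\,\Phi(\mathcal{H})$.
   Context: Let $\mathcal{X}$ be a set (instance domain), $\mathcal{Y}$ a set (label space), $\ell:\mathcal{Y}\times\mathcal{Y}\to\mathbb{R}_{\ge0}$ a loss. For $c\ge1$, $\ell$ is a $c$-approximate pseudo-metric if $\ell(y,y)=0$, $\ell(y_1,y_2)=\ell(y_2,y_1)$, and $\ell(y_1,y_2)\le c(\ell(y_1,y_3)+\ell(y_2,y_3))$ for all $y_1,y_2,y_3\in\mathcal{Y}$. For $\mathcal{H}\subseteq\mathcal{Y}^{\mathcal{X}}$ define $d_\ell(f,g)=\sup_{x\in\mathcal{X}}\ell(f(x),g(x))$ and $\operatorname{diam}(\mathcal{H})=\sup_{f,g\in\mathcal{H}}d_\ell(f,g)$. For $U\subseteq\mathcal{H}$ and $\varepsilon>0$, $N(U,\varepsilon)$ is the minimum cardinality of a set $S\subseteq\mathcal{H}$ such that every $u\in U$ has some $s\in S$ with $d_\ell(u,s)\le\varepsilon$ ($+\infty$ if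 no finite such set exists). The entropy potential is $\Phi(U)=\int_0^{\operatorname{diam}(\mathcal{H})}\log_2 N(U,\varepsilon)\,d\varepsilon\in[0,+\infty]$. A scaled Littlestone tree of depth $D\le\infty$ is a complete binary tree whose internal nodes $u\in\{0,1\}^{<D}$ are labeled by $x_u\in\mathcal{X}$ and whose two outgoing edges are labeled $s_{u,0},s_{u,1}\in\mathcal{Y}$; the gap at $u$ is $\gamma_u=\ell(s_{u,0},s_{u,1})$. It is realizable by $\mathcal{H}$ if for every branch $b\in\{0,1\}^D$ and every finite $n\le D$ there is $h\in\mathcal{H}$ with $h(x_{b_{\le t}})=s_{b_{\le t},b_{t+1}}$ for $t=0,\dots,n-1$, where $b_{\le t}$ is the length-$t$ prefix of $b$. The online dimension is $\mathbb{D}_{\mathrm{onl}}(\mathcal{H})=\sup_{\mathcal{T}}\inf_{b}\sum_{t=0}^{D(\mathcal{T})-1}\gamma_{b_{\le t}}$, the sup over scaled Littlestone trees $\mathcal{T}$ realizable by $\mathcal{H}$ (of any depth $D(\mathcal{T})\le\infty$) and the inf over branches $b$ of $\mathcal{T}$. *)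

(* Defs.v *)
From HB Require Import structures.
From mathcomp Require Import all_boot all_order all_algebra.
From mathcomp Require Import all_classical all_reals all_analysis.
Set Implicit Arguments. Unset Strict Implicit. Unset Printing Implicit Defensive.
Import Order.TTheory GRing.Theory Num.Theory.
Local Open Scope classical_set_scope.
Local Open Scope ring_scope.

Section Defs.
Variables (R : realType) (X Y : Type).

Definition approx_pseudo_metric (c : R) (l : Y -> Y -> R) : Prop :=
  (forall y1 y2, 0 <= l y1 y2) /\
  (forall y, l y y = 0) /\
  (forall y1 y2, l y1 y2 = l y2 y1) /\
  (forall y1 y2 y3, l y1 y2 <= c * (l y1 y3 + l y2 y3)).

(* d_l(f,g) = sup_x l(f x, g x)  (sup of nonnegative reals, empty sup = 0) *)
Definition dl (l : Y -> Y -> R) (f g : X -> Y) : \bar R :=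
  ereal_sup ([set 0%E] `|` range (fun x => (l (f x) (g x))%:E)).

Definition diam (l : Y -> Y -> R) (H : set (X -> Y)) : \bar R :=
  ereal_sup ([set 0%E] `|` [set dl l f g | f in H & g in H]).

(* N(U, e): least n such that some family of n elements of H e-covers U;
   +oo if no finite such family exists (ereal_inf of the empty set). *)
Definition covers (l : Y -> Y -> R) (H U : set (X -> Y)) (e : R) (n : nat) : Prop :=
  exists S : 'I_n -> (X -> Y),
    (forall i, H (S i)) /\
    (forall u, U u -> exists i, (dl l u (S i) <= e%:E)%E).

Definition covering_number (l : Y -> Y -> R) (H U : set (X -> Y)) (e : R) : \bar R :=
  ereal_inf [set (n%:R)%:E | n in covers l H U e].

Definition log2e (x : \bar R) : \bar R :=
  match x with
  | r%:E => (ln r / ln 2)%:E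
  | +oo%E => +oo%E
  | -oo%E => -oo%E
  end.

Definition entropy_potential (l : Y -> Y -> R) (H U : set (X -> Y)) : \bar R :=
  (\int[@lebesgue_measure R]_(e in [set e : R | (0%E <= e%:E <= diam l H)%E])
     log2e (covering_number l H U e))%E.

(* Scaled Littlestone trees: nodes are bit-sequences u with size u < depth;
   depth = None means infinite depth. *)
Record sltree := SLTree {
  depth : option nat;
  xlab : seq bool -> X;
  slab : seq bool -> bool -> Y }.

Definition lt_depth (T : sltree) (n : nat) : Prop :=
  match depth T with None => True | Some D => (n < D)%N end.
Definition le_depth (T : sltree) (n : nat) : Prop :=
  match depth T with None => True | Some D => (n <= D)%N end.

Definition prefix (b : nat -> bool) (t : nat) : seq bool := mkseq b t.

Definition gap (l : Y -> Y -> R) (T : sltree) (u : seq bool) : R :=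
  l (slab T u false) (slab T u true).

(* a branch is an infinite bit sequence; only its first D bits matter *)
Definition realizable (H : set (X -> Y)) (T : sltree) : Prop :=
  forall (b : nat -> bool) (n : nat), le_depth T n ->
    exists h, H h /\
      forall t, (t < n)%N -> h (xlab T (prefix b t)) = slab T (prefix b t) (b t).

Definition branch_sum (l : Y -> Y -> R) (T : sltree) (b : nat -> bool) : \bar R :=
  match depth T with
  | Some D => (\sum_(t < D) (gap l T (prefix b t))%:E)%E
  | None => (\sum_(0 <= t <oo) (gap l T (prefix b t))%:E)%E
  end.

Definition online_dim (l : Y -> Y -> R) (H : set (X -> Y)) : \bar R :=
  ereal_sup [set ereal_inf [set branch_sum l T b | b in [set: nat -> bool]]
            | T in realizable H].

End Defs.

(* Main.v *)
Require Import Defs.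
From HB Require Import structures.
From mathcomp Require Import all_boot all_order all_algebra.
From mathcomp Require Import all_classical all_reals all_analysis.
From mathcomp Require Import measurable_realfun.
From mathcomp Require Import zify ring lra.
Import Order.TTheory GRing.Theory Num.Theory.
Set Implicit Arguments. Unset Strict Implicit.
Local Open Scope classical_set_scope.
Local Open Scope ring_scope.


Section Aux.
Variables (R : realType) (X Y : Type) (l : Y -> Y -> R) (H : set (X -> Y)).
Local Open Scope ereal_scope.

Lemma dl_ge (f g : X -> Y) x : (l (f x) (g x))%:E <= dl l f g.
Proof. by apply: ereal_sup_ubound; right; exists x. Qed.

Lemma dl_ge0 (f g : X -> Y) : 0 <= dl l f g.
Proof. by apply: ereal_sup_ubound; left. Qed.

Lemma diam_ge f g : H f -> H g -> dl l f g <= diam l H.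
Proof. by move=> Hf Hg; apply: ereal_sup_ubound; right; exists f => //; exists g. Qed.

Lemma diam_ge0 : 0 <= diam l H.
Proof. by apply: ereal_sup_ubound; left. Qed.

Definition natinf (z : \bar R) := z = +oo \/ exists m : nat, z = (m%:R)%:E.

Lemma cov_le U e n : covers l H U e n -> covering_number l H U e <= (n%:R)%:E.
Proof. by move=> cv; apply: ereal_inf_lbound; exists n. Qed.

Lemma cov_min U e : (exists n, covers l H U e n) ->
  exists m, covers l H U e m /\ covering_number l H U e = (m%:R)%:E.
Proof.
move=> ex.
have ex' : exists n, `[< covers l H U e n >].
  by case: ex => n cv; exists n; apply/asboolP.
exists (ex_minn ex'); split; first by case: ex_minnP => m /asboolP.
apply/le_anti/andP; split.
  by apply: cov_le; case: ex_minnP => m /asboolP.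
apply: le_ereal_inf_tmp => _ [n cv <-].
rewrite lee_fin ler_nat; case: ex_minnP => m _; apply.
exact/asboolP.
Qed.

Lemma cov_none U e : ~ (exists n, covers l H U e n) ->
  covering_number l H U e = +oo.
Proof.
move=> nex; rewrite /covering_number.
rewrite (_ : [set _ | n in _] = set0) ?ereal_inf0 //.
by apply/seteqP; split => // z [n cv _]; exfalso; apply: nex; exists n.
Qed.

Lemma cov_natinf U e : natinf (covering_number l H U e).
Proof.
have [ex|nex] := pselect (exists n, covers l H U e n).
  by right; have [m [_ ->]] := cov_min ex; exists m.
by left; apply: cov_none.
Qed.

Lemma cov_ge1 U e : (exists u, U u) -> 1 <= covering_number l H U e.
Proof.
move=> [u Uu]; apply: le_ereal_inf_tmp => z [n [S [HS cS]] <-].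
case: n S HS cS => [|n] S HS cS; last by rewrite lee_fin ler1n.
by have [[] ] := cS u Uu.
Qed.

Lemma cov_sub U U' e n : U `<=` U' -> covers l H U' e n -> covers l H U e n.
Proof. by move=> sU [S [HS cS]]; exists S; split => // u /sU; apply: cS. Qed.

Lemma cov_mono U U' e e' : U `<=` U' -> (e <= e')%R ->
  covering_number l H U e' <= covering_number l H U' e.
Proof.
move=> sU ee; apply: le_ereal_inf_tmp => _ [n [S [HS cS]] <-].
apply: cov_le; exists S; split => // u /sU /cS [i hi]; exists i.
by rewrite (le_trans hi)// lee_fin.
Qed.

Lemma log2e_ge0 z : natinf z -> 0 <= log2e z.
Proof.
case=> [->|[m ->]]; rewrite /log2e ?leey // lee_fin divr_ge0 //.
  by case: m => [|m]; [rewrite ln0 | rewrite ln_ge0 // ler1n].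
by rewrite ln_ge0 // ler1n.
Qed.

Lemma log2e_le z z' : natinf z -> natinf z' -> z <= z' -> log2e z <= log2e z'.
Proof.
case=> [->|[m ->]]; case=> [->|[m' ->]] //=; rewrite /log2e ?leye_eq ?leey //.
rewrite !lee_fin ler_nat => mm; rewrite ler_pM2r ?invr_gt0 ?ln_gt0 ?ltr1n //.
case: m mm => [|m] mm.
  rewrite ln0 //; case: m' mm => [|m'] _; [by rewrite ln0 | by rewrite ln_ge0 // ler1n].
by rewrite ler_ln ?posrE ?ltr0n ?ler_nat //; apply: leq_trans mm.
Qed.

End Aux.


Section Key.
Variables (R : realType) (X Y : Type) (c : R) (l : Y -> Y -> R) (H : set (X -> Y)).
Hypotheses (c1 : 1 <= c) (hl : approx_pseudo_metric c l).
Variables (V : set (X -> Y)) (x : X) (s : bool -> Y).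
Let Vb b := V `&` [set h | h x = s b].
Hypotheses (ne0 : exists h, Vb false h) (ne1 : exists h, Vb true h).
Let g := l (s false) (s true).
Let F U e := log2e (covering_number l H U e).

Lemma key_pt e : (F (Vb false) e + F (Vb true) e +
   ((\1_(`]-oo, g / (2 * c)[%classic) e)%:E + (\1_(`]-oo, g / (2 * c)[%classic) e)%:E)
   <= F V e + F V e)%E.
Proof.
have [ex|nex] := pselect (exists n, covers l H V e n); last first.
  by rewrite /F (cov_none nex) /= addye ?leey.
have [m [[S [HS cS]] Nm]] := cov_min ex.
have [ea|ea] := ltP e (g / (2 * c)).
  have c0 : 0 < c by apply: lt_le_trans c1.
  rewrite indicE mem_set; last by rewrite /= in_itv /= ea.
  pose P b (i : 'I_m) := `[< exists h, Vb b h /\ (dl l h (S i) <= e%:E)%E >].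
  pose A b := finset (P b).
  have covA b : covers l H (Vb b) e #|A b|.
    exists (fun k => S (enum_val k)); split => [k|h Vh]; first exact: HS.
    have [i hi] := cS h Vh.1.
    have iA : i \in A b by rewrite inE; apply/asboolP; exists h.
    by exists (enum_rank_in iA i); rewrite enum_rankK_in.
  have disj : #|A false :&: A true| = 0%N.
    apply/eqP; rewrite cards_eq0 setI_eq0 disjoint_subset; apply/fintype.subsetP => i.
    rewrite !inE /P => -[h0 [[_ h0x] d0]].
    apply/negP => /asboolP[h1 [[_ h1x] d1]].
    have e0 : (l (h0 x) (S i x) <= e)%R.
      by rewrite -lee_fin; apply: le_trans d0; apply: dl_ge.
    have e1 : (l (h1 x) (S i x) <= e)%R.
      by rewrite -lee_fin; apply: le_trans d1; apply: dl_ge.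
    rewrite h0x in e0; rewrite h1x in e1.
    have [_ [_ [_ tri]]] := hl.
    have := tri (s false) (s true) (S i x); rewrite -/g => gle.
    have : c * (l (s false) (S i x) + l (s true) (S i x)) <= c * (e + e).
      by rewrite ler_pM2l //; lra.
    move: ea; rewrite ltr_pdivlMr ?mulr_gt0 // => ea.
    nra.
  have cardAB : (#|A false| + #|A true| <= m)%N.
    rewrite -cardsUI disj addn0; apply: leq_trans (max_card _) _.
    by rewrite card_ord.
  have Nb b : exists mb, covering_number l H (Vb b) e = (mb%:R)%:E /\
      (1 <= mb)%N /\ (mb <= #|A b|)%N.
    have [mb [_ Nmb]] := cov_min (ex_intro _ _ (covA b)).
    exists mb; split => //; split.
      have : (1 <= covering_number l H (Vb b) e)%E.
        by apply: cov_ge1; clear -ne0 ne1; case: b.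
      by rewrite Nmb lee_fin ler1n.
    by have := cov_le (covA b); rewrite Nmb lee_fin ler_nat.
  have [m0 [N0 [m01 m0A]]] := Nb false.
  have [m1 [N1 [m11 m1A]]] := Nb true.
  rewrite /F Nm N0 N1 /log2e -!EFinD lee_fin (_ : (true%:R : R) = 1) //.
  have msum : (m0 + m1 <= m)%N.
    by apply: leq_trans cardAB; apply: leq_add.
  have msq : ((m0 + m1) * (m0 + m1) <= m * m)%N by apply: leq_mul.
  have nat4 : (m0 * m1 * 2 * 2 <= m * m)%N.
    apply: leq_trans msq; have [+ _] := nat_Cauchy m0 m1; rewrite !expnS !expn0 !muln1; nia.
  have mp : (0 < m)%N by apply: leq_trans msum; apply: leq_trans m01 _; rewrite leq_addr.
  have L0 : 0 < ln (2 : R) by rewrite ln_gt0 // ltr1n.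
  have key : ln ((m0%:R : R) * m1%:R * 2 * 2) <= ln ((m%:R : R) * m%:R).
    rewrite ler_ln ?posrE ?mulr_gt0 ?ltr0n //.
    by rewrite -!natrM ler_nat.
  rewrite !lnM ?posrE ?mulr_gt0 ?ltr0n // in key.
  have iL0 : 0 < (ln (2:R))^-1 by rewrite invr_gt0.
  have LiL : ln (2:R) * (ln (2:R))^-1 = 1 by rewrite mulfV // gt_eqF.
  move: LiL key iL0; set L := ln (2:R); set iL := L^-1.
  set a0 := ln (m0%:R : R); set a1 := ln (m1%:R : R); set am := ln (m%:R : R).
  move=> LiL key iL0.
  have prod : 0 <= (am + am - (a0 + a1 + L + L)) * iL.
    by apply: mulr_ge0; [rewrite subr_ge0|exact: ltW].
  nra.
rewrite indicE memNset; last by rewrite /= in_itv /= ltNge ea.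
rewrite addr0 adde0.
have nle b : (F (Vb b) e <= F V e)%E.
  apply: log2e_le; [exact: cov_natinf|exact: cov_natinf|].
  rewrite Nm; apply: cov_le; apply: cov_sub (_ : Vb b `<=` V) _ => //.
    by move=> h [].
  by exists S.
by apply: leeD; apply: nle.
Qed.
End Key.


Lemma noninc_emeas (R : realType) (D : set R) (f : R -> \bar R) : measurable D ->
  (forall s t, s <= t -> (f t <= f s)%E) -> measurable_fun D (f : R -> \bar R).
Proof.
move=> mD fni; apply: (measurability _ (ErealGenOInfty.measurableE R)).
move=> /= _ [_ [a ->]] <-; apply: measurableI => //.
apply: is_interval_measurable => s t /=; rewrite !in_itv /= !andbT => fs ft u /andP[su ut].
by rewrite in_itv/= andbT (lt_le_trans ft)// fni.
Qed.

Section Integ.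
Variables (R : realType) (X Y : Type) (c : R) (l : Y -> Y -> R) (H : set (X -> Y)).
Hypotheses (c1 : 1 <= c) (hl : approx_pseudo_metric c l) (hd : (diam l H < +oo)%E).
Let Dom := [set e : R | (0%E <= e%:E <= diam l H)%E].
Let F U e := log2e (covering_number l H U e).

Lemma diam_fin : exists d, diam l H = d%:E /\ 0 <= d.
Proof.
have d0 := diam_ge0 l H.
have : diam l H \is a fin_num by rewrite ge0_fin_numE.
by move=> /fineK dE; exists (fine (diam l H)); split => //; rewrite -lee_fin dE.
Qed.

Lemma mDom : measurable Dom.
Proof.
have [d [dE d0]] := diam_fin.
rewrite (_ : Dom = `[0, d]%classic); first exact: measurable_itv.
rewrite /Dom dE; apply/seteqP; split => e /=; rewrite in_itv /=.
  by rewrite !lee_fin.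
by rewrite !lee_fin.
Qed.

Lemma mF U : measurable_fun Dom (F U).
Proof.
apply: noninc_emeas; first exact: mDom.
move=> s t st; apply: log2e_le; try exact: cov_natinf.
by apply: cov_mono.
Qed.

Lemma F_ge0 U e : (0 <= F U e)%E.
Proof. by apply: log2e_ge0; exact: cov_natinf. Qed.

Variables (V : set (X -> Y)) (x : X) (s : bool -> Y).
Hypothesis VH : V `<=` H.
Let Vb b := V `&` [set h | h x = s b].
Hypotheses (ne0 : exists h, Vb false h) (ne1 : exists h, Vb true h).
Let g := l (s false) (s true).

Lemma key_int : (entropy_potential l H (Vb false) + entropy_potential l H (Vb true)
   + (g / c)%:E <= entropy_potential l H V + entropy_potential l H V)%E.
Proof.
have c0 : 0 < c by apply: lt_le_trans c1.
have [d [dE d0]] := diam_fin.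
have g0 : 0 <= g by case: hl => + _; apply.
have gd : g <= d.
  case: ne0 => h0 [Vh0 h0x]; case: ne1 => h1 [Vh1 h1x].
  rewrite -lee_fin -dE /g -h0x -h1x.
  apply: le_trans (dl_ge l h0 h1 x) _.
  by apply: diam_ge; apply: VH.
pose a := g / (2 * c).
have a0 : 0 <= a by rewrite divr_ge0 // mulr_ge0 // ltW.
have ag : a <= g.
  rewrite /a ler_pdivrMr ?mulr_gt0 //.
  have h : 0 <= g * (c - 1) by apply: mulr_ge0 => //; rewrite subr_ge0.
  rewrite mulrBr mulr1 subr_ge0 in h; lra.
pose I := `]-oo, a[%classic.
pose G e := (\1_I e)%:E : \bar R.
have mG : measurable_fun Dom G.
  rewrite (_ : G = EFin \o (\1_I : R -> R)) //; apply/measurable_EFinP.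
  by apply: measurable_indic; exact: measurable_itv.
have G0 e : (0 <= G e)%E by rewrite lee_fin.
have IG : (\int[lebesgue_measure]_(e in Dom) G e = a%:E)%E.
  rewrite integral_indic; last exact: measurable_itv.
  rewrite (_ : I `&` Dom = `[0, a[%classic).
    apply: eq_trans; first exact: (lebesgue_measure_itv `[0, a[).
    rewrite /= lte_fin; case: ltP => [_|a0']; first by rewrite sube0.
    by have -> : a = 0 by apply/le_anti; rewrite a0' a0.
  apply/seteqP; split => e /=; rewrite /I /Dom /= !in_itv /= dE.
    by move=> [ea /andP[e0 _]]; rewrite -lee_fin e0.
  move=> /andP[e0 ea]; split => //; rewrite !lee_fin e0 /=.
  by apply: le_trans (ltW ea) (le_trans ag gd).
  exact: mDom.
have mD := mDom.
have key e := @key_pt R X Y c l H c1 hl V x s ne0 ne1 e.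
have le := @ge0_le_integral _ _ R lebesgue_measure Dom mD
  (fun e => F (Vb false) e + F (Vb true) e + (G e + G e))%E
  (fun e => F V e + F V e)%E.
have side1 : forall e, Dom e -> (0 <= F (Vb false) e + F (Vb true) e + (G e + G e))%E.
  by move=> e _; rewrite !adde_ge0 ?F_ge0.
have side2 : measurable_fun Dom (fun e => F (Vb false) e + F (Vb true) e + (G e + G e))%E.
  by apply: emeasurable_funD; [apply: emeasurable_funD; apply: mF|apply: emeasurable_funD].
have side3 : measurable_fun Dom (fun e => F V e + F V e)%E.
  by apply: emeasurable_funD => //; apply: mF.
have hle := le side1 side2 side3 (fun e _ => key e).
rewrite ge0_integralD // in hle; try (solve [move=> ? _; rewrite ?adde_ge0 ?F_ge0 ?G0 // | apply: emeasurable_funD => //; apply: mF | apply: mF ]).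
rewrite ge0_integralD // in hle; try (solve [move=> ? _; rewrite ?adde_ge0 ?F_ge0 ?G0 // | apply: emeasurable_funD => //; apply: mF | apply: mF ]).
rewrite ge0_integralD // in hle; try (solve [move=> ? _; rewrite ?adde_ge0 ?F_ge0 ?G0 // | apply: emeasurable_funD => //; apply: mF | apply: mF ]).
rewrite ge0_integralD // in hle; try (solve [move=> ? _; rewrite ?adde_ge0 ?F_ge0 ?G0 // | apply: emeasurable_funD => //; apply: mF | apply: mF ]).
rewrite IG -EFinD (_ : a + a = g / c) in hle; last by rewrite /a; field; rewrite gt_eqF.
exact: hle.
Qed.

End Integ.


Lemma half_step (R : realType) (a b v : \bar R) (k : R) :
  (0 <= a)%E -> (0 <= b)%E -> 0 <= k -> (a <= b)%E ->
  (a + b + (2 * k)%:E <= v + v)%E -> (a + k%:E <= v)%E.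
Proof.
move=> a0 b0 k0 ab.
case: v => [r| | ]; last 2 first.
- by move=> _; apply: leey.
- move=> h; exfalso; move: h; apply/negP; rewrite -ltNge /=.
  by apply: (@lt_le_trans _ _ 0%E); [exact: ltNy0|rewrite !adde_ge0 // lee_fin mulr_ge0].
case: a a0 ab => [a| |] //; case: b b0 => [b| |] //=.
- move=> a0 b0 ab h; rewrite !lee_fin in a0 b0 ab; rewrite -!EFinD !lee_fin in h *; lra.
Qed.

Lemma mkseq_nth_take (s : seq bool) t : (t <= size s)%N ->
  mkseq (nth false s) t = take t s.
Proof.
move=> ts; apply: (@eq_from_nth _ false); first by rewrite size_mkseq size_take_min; lia.
by move=> i; rewrite size_mkseq => it; rewrite nth_mkseq // nth_take.
Qed.

Section Tree.
Variables (R : realType) (X Y : Type) (c : R) (l : Y -> Y -> R) (H : set (X -> Y)).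
Hypotheses (c1 : 1 <= c) (hl : approx_pseudo_metric c l) (hd : (diam l H < +oo)%E).
Variable T : sltree X Y.
Hypothesis rT : realizable H T.

Definition W (u : seq bool) : set (X -> Y) := [set h | H h /\
  forall t, (t < size u)%N -> h (xlab T (take t u)) = slab T (take t u) (nth false u t)].

Definition nxt (u : seq bool) : bool :=
  if (entropy_potential l H (W (rcons u false)) <= entropy_potential l H (W (rcons u true)))%E
  then false else true.

Fixpoint path n := if n is n'.+1 then rcons (path n') (nxt (path n')) else [::].

Definition gb t := nth false (path t.+1) t.

Lemma size_path n : size (path n) = n.
Proof. by elim: n => //= n IH; rewrite size_rcons IH. Qed.

Lemma path_take t n : (t <= n)%N -> take t (path n) = path t.
Proof.
elim: n => [|n IH]; first by rewrite leqn0 => /eqP ->.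
rewrite leq_eqVlt => /orP[/eqP ->|tn]; first by rewrite take_oversize // size_path.
by rewrite /= -cats1 takel_cat ?size_path // IH.
Qed.

Lemma path_nth t n : (t < n)%N -> nth false (path n) t = gb t.
Proof. by move=> tn; rewrite /gb -(path_take tn) nth_take. Qed.

Lemma prefix_gb t : Defs.prefix gb t = path t.
Proof.
apply: (@eq_from_nth _ false); first by rewrite size_mkseq size_path.
move=> i; rewrite size_mkseq => it; rewrite nth_mkseq // path_nth //.
Qed.

Lemma W_rcons u b : W (rcons u b) = W u `&` [set h | h (xlab T u) = slab T u b].
Proof.
apply/seteqP; split => h /=.
  move=> [Hh Wh]; split; last first.
    have := Wh (size u); rewrite size_rcons ltnSn nth_rcons ltnn eqxx.
    by rewrite -cats1 take_size_cat //; apply.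
  split => // t tu; have := Wh t; rewrite size_rcons ltnS (ltnW tu) -cats1.
  by rewrite takel_cat ?(ltnW tu) // nth_cat tu; apply.
move=> [[Hh Wh] hb]; split => // t; rewrite size_rcons ltnS leq_eqVlt.
case/orP => [/eqP ->|tu]; first by rewrite nth_rcons ltnn eqxx -cats1 take_size_cat.
by rewrite -cats1 takel_cat ?(ltnW tu) // nth_cat tu; apply: Wh.
Qed.

Lemma W_ne u : le_depth T (size u) -> exists h, W u h.
Proof.
move=> du; have := rT; move=> /(_ (nth false u) (size u) du) [h [Hh hh]].
exists h; split => // t tu; have := hh t tu.
by rewrite /Defs.prefix mkseq_nth_take // ltnW.
Qed.

Lemma W_sub u : W u `<=` H.
Proof. by move=> h []. Qed.

Lemma W_nil : W [::] = H.
Proof. by apply/seteqP; split => h /=; [case | move=> Hh; split]. Qed.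

Lemma Phi_ge0 U : (0 <= entropy_potential l H U)%E.
Proof. by apply: integral_ge0 => e _; apply: log2e_ge0; apply: cov_natinf. Qed.

Lemma gap_ge0 u : 0 <= gap l T u.
Proof. by case: hl => + _; apply. Qed.

Lemma step n : lt_depth T n ->
  (entropy_potential l H (W (path n.+1)) + (gap l T (path n) / (2 * c))%:E
   <= entropy_potential l H (W (path n)))%E.
Proof.
move=> dn; have c0 : 0 < c by apply: lt_le_trans c1.
set u := path n.
have ne b : exists h, (W u `&` [set h | h (xlab T u) = slab T u b]) h.
  rewrite -W_rcons; apply: W_ne; rewrite size_rcons size_path.
  by move: dn; rewrite /le_depth /lt_depth; case: depth.
have ki := @key_int R X Y c l H c1 hl hd (W u) (xlab T u) (slab T u) (@W_sub u) (ne false) (ne true).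
rewrite /= -!W_rcons in ki.
have e2 : l (slab T u false) (slab T u true) / c = 2 * (gap l T u / (2 * c)).
  by rewrite /gap; field; rewrite gt_eqF.
rewrite e2 in ki.
have k0 : 0 <= gap l T u / (2 * c) by rewrite divr_ge0 ?gap_ge0 // mulr_ge0 // ltW.
rewrite /= -/u /nxt; case: ifP => le.
  by apply: half_step ki => //; apply: Phi_ge0.
apply: (@half_step R (entropy_potential l H (W (rcons u true)))
   (entropy_potential l H (W (rcons u false)))) => //; try exact: Phi_ge0.
  by move/negbT: le; rewrite -ltNge => /ltW.
by rewrite (addeC (entropy_potential l H (W (rcons u true)))).
Qed.

Lemma bound n : le_depth T n ->
  (entropy_potential l H (W (path n)) + \sum_(t < n) (gap l T (path t) / (2 * c))%:E
   <= entropy_potential l H H)%E.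
Proof.
elim: n => [|n IH] dn; first by rewrite big_ord0 adde0 /= W_nil.
have dn' : le_depth T n by move: dn; rewrite /le_depth; case: depth => // D; apply: ltnW.
have ltn : lt_depth T n by move: dn; rewrite /le_depth /lt_depth; case: depth.
apply: le_trans (IH dn'); rewrite big_ord_recr /= addeA.
rewrite -addeA [X in (_ + X <= _)%E]addeC addeA.
by apply: leeD2r; apply: step.
Qed.

Lemma partial n : le_depth T n ->
  ((\sum_(t < n) (gap l T (Defs.prefix gb t))%:E)
   <= (4 * c)%:E * entropy_potential l H H)%E.
Proof.
move=> dn; have c0 : 0 < c by apply: lt_le_trans c1.
under eq_bigr do rewrite prefix_gb.
have h := bound dn.
rewrite sumEFin in h; rewrite sumEFin.
rewrite -mulr_suml in h.
set S := \sum_(t < n) gap l T (path t).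
have h' : ((S / (2 * c))%:E <= entropy_potential l H H)%E.
  by apply: le_trans h; apply: lee_paddl => //; apply: Phi_ge0.
have -> : S = (2 * c) * (S / (2 * c)).
  by rewrite mulrC divfK // gt_eqF // mulr_gt0.
rewrite EFinM; apply: le_trans (_ : ((2 * c)%:E * entropy_potential l H H <= _)%E).
  by apply: lee_wpmul2l => //; rewrite lee_fin mulr_ge0 // ltW.
by apply: lee_wpmul2r; [apply: Phi_ge0|rewrite lee_fin; lra].
Qed.

Lemma tree_bound : exists b, (branch_sum l T b <= (4 * c)%:E * entropy_potential l H H)%E.
Proof.
exists gb; rewrite /branch_sum.
case E: (depth T) => [D|].
  by apply: partial; rewrite /le_depth E.
apply: lime_le.
  by apply: is_cvg_nneseries => t _ _; rewrite lee_fin gap_ge0.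
apply: nearW => n; rewrite big_mkord; apply: partial; by rewrite /le_depth E.
Qed.

End Tree.

Theorem theorem3p1 (R : realType) (X Y : Type) (c : R) (l : Y -> Y -> R)
    (H : set (X -> Y)) :
  1 <= c ->
  approx_pseudo_metric c l ->
  (diam l H < +oo)%E ->
  (forall T : sltree X Y, realizable H T ->
     exists b : nat -> bool,
       (branch_sum l T b <= (4 * c)%:E * entropy_potential l H H)%E) /\
  (online_dim l H <= (4 * c)%:E * entropy_potential l H H)%E.
Proof.
move=> c1 hl hd.
have P1 : forall T : sltree X Y, realizable H T ->
     exists b : nat -> bool,
       (branch_sum l T b <= (4 * c)%:E * entropy_potential l H H)%E.
  by move=> T rT; apply: tree_bound.
split => //.
apply: ge_ereal_sup => _ [T rT <-].
have [b hb] := P1 T rT.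
by apply: le_trans hb; apply: ereal_inf_lbound; exists b.
Qed.
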